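(* Let $a>0$ and let $f:(0,\infty)\to(0,\infty)$ be twice continuously differentiable with $f'(x)>0$ and $f''(x)<0$ for all $x>0$, and $\lim_{x\to\infty}f(x)=\infty$. Suppose $x^*>0$ satisfies $f(x^*+1)\le a$. Then there exists a positive integer $n\ge x^*$ such that $0\le a-f(n)\le f'(x^* )$. *)

(* Defs.v *)
From Stdlib Require Import Reals.
From Coquelicot Require Export Coquelicot.
Open Scope R_scope.

Definition C2_on_pos (f : R -> R) : Prop :=
  forall x : R, 0 < x ->
    ex_derive f x /\ ex_derive (Derive f) x /\ continuous (Derive (Derive f)) x.

(* Main.v *)
Require Import Defs.
From Stdlib Require Import Reals Lra Lia ZArith Classical.
From Coquelicot Require Import Coquelicot.
Open Scope R_scope.

Lemma mvt_pos (g : R -> R) x y : (forall z, 0 < z -> ex_derive g z) -> 0 < x -> x <= y ->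
  exists c, x <= c <= y /\ g y - g x = Derive g c * (y - x).
Proof.
  intros Hd Hx Hxy.
  destruct (MVT_gen g x y (Derive g)) as [c [Hc Heq]].
  - intros z Hz. rewrite Rmin_left in Hz by lra. rewrite Rmax_right in Hz by lra.
    apply Derive_correct, Hd; lra.
  - intros z Hz. rewrite Rmin_left in Hz by lra. rewrite Rmax_right in Hz by lra.
    apply continuity_pt_filterlim. apply (ex_derive_continuous (V:=R_NormedModule)), Hd; lra.
  - rewrite Rmin_left in Hc by lra. rewrite Rmax_right in Hc by lra.
    exists c; split; auto.
Qed.

Theorem lemma6p1 (a : R) (f : R -> R) (xs : R)
  (ha : 0 < a)
  (hpos : forall x : R, 0 < x -> 0 < f x)
  (hC2 : C2_on_pos f)
  (hd1 : forall x : R, 0 < x -> 0 < Derive f x)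
  (hd2 : forall x : R, 0 < x -> Derive (Derive f) x < 0)
  (hlim : is_lim f p_infty p_infty)
  (hxs : 0 < xs)
  (hfx : f (xs + 1) <= a) :
  exists n : nat, (1 <= n)%nat /\ xs <= INR n /\
    0 <= a - f (INR n) <= Derive f xs.
Proof.
  assert (Hf1 : forall z, 0 < z -> ex_derive f z) by (intros z Hz; apply hC2, Hz).
  assert (Hf2 : forall z, 0 < z -> ex_derive (Derive f) z) by (intros z Hz; apply hC2, Hz).
  assert (Hmono : forall x y, 0 < x -> x <= y -> f x <= f y).
  { intros x y Hx Hxy. destruct (mvt_pos f x y Hf1 Hx Hxy) as [c [Hc E]].
    assert (0 < Derive f c) by (apply hd1; lra). nra. }
  assert (Hdmono : forall x y, 0 < x -> x <= y -> Derive f y <= Derive f x).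
  { intros x y Hx Hxy. destruct (mvt_pos (Derive f) x y Hf2 Hx Hxy) as [c [Hc E]].
    assert (Derive (Derive f) c < 0) by (apply hd2; lra). nra. }
  destruct (hlim (fun y => a < y)) as [M HM].
  { exists a. intros; auto. }
  set (P := fun n : nat => (1 <= n)%nat /\ xs <= INR n /\ f (INR n) <= a).
  assert (HS0 : exists n0, P n0).
  { destruct (archimed xs) as [H1 H2].
    assert (Hu : (0 < up xs)%Z) by (apply lt_0_IZR; lra).
    exists (Z.to_nat (up xs)).
    assert (E : INR (Z.to_nat (up xs)) = IZR (up xs)).
    { rewrite INR_IZR_INZ, Z2Nat.id by lia. reflexivity. }
    unfold P; rewrite E; repeat split.
    - lia.
    - lra.
    - apply Rle_trans with (f (xs + 1)); auto. apply Hmono; lra. }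
  assert (Hex : exists n, P n /\ ~ P (Datatypes.S n)).
  { destruct HS0 as [n0 Hn0]. apply NNPP; intro Hno.
    assert (Hall : forall k, P (n0 + k)%nat).
    { induction k. { rewrite Nat.add_0_r; auto. }
      apply NNPP; intro Hk. apply Hno. exists (n0 + k)%nat. split; auto.
      replace (Datatypes.S (n0 + k)) with (n0 + Datatypes.S k)%nat by lia. auto. }
    destruct (INR_unbounded M) as [k Hk].
    destruct (Hall k) as [_ [Hx Hfa]].
    assert (a < f (INR (n0 + k))).
    { apply HM. rewrite plus_INR. assert (0 <= INR n0) by apply pos_INR. lra. }
    lra. }
  destruct Hex as [N [[HN1 [HN2 HN3]] HN4]].
  exists N. split; auto. split; auto. split; [lra|].
  assert (Hlt : a < f (INR (Datatypes.S N))).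
  { apply Rnot_le_lt. intro H. apply HN4. unfold P. rewrite S_INR in *. split; [lia|split; lra]. }
  rewrite S_INR in Hlt.
  assert (HNp : 0 < INR N) by lra.
  destruct (mvt_pos f (INR N) (INR N + 1) Hf1 HNp ltac:(lra)) as [c [Hc E]].
  assert (Derive f c <= Derive f xs) by (apply Hdmono; lra).
  lra.
Qed.
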